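(* Let $S=sgp^+\langle A\mid R\rangle$ with $A$ finite, let $L\subseteq A^+$, and suppose $(A,L)$ is a prefix-automatic structure for $S$. Let $e$ be a new symbol, $B=A\cup\{e\}$, $K=L\cup\{e\}$, and $S^1=sgp^+\langle A\cup\{e\}\mid R,\ ea=ae=a\ (a\in A),\ ee=e\rangle$. Then $(B,K)$ is a prefix-automatic structure for $S^1$.
   Context: $A^*$ is the free monoid on $A$ (empty word $\varepsilon$), $A^+=A^*\setminus\{\varepsilon\}$. $sgp^+\langle A\mid R\rangle$ denotes the semigroup $A^+$ modulo the congruence generated by $R$. A language is regular if accepted by a finite state automaton. Let $\$\notin A$, $A(2,\$)=(A\cup\{\$\})^2\setminus\{(\$,\$)\}$. For $\alpha,\beta\in A^*$, $(\alpha,\beta)\delta_A^R$ is the word over $A(2,\$)$ obtained by padding the shorter of $\alpha,\beta$ on the right with $\$$'s to equal length and reading the pairs of letters position by position. For a semigroup $S$ generated by finite $A$ with canonical epimorphism $\phi:A^+\to S$ and a regular $L\subseteq A^+$ with $\phi(L)=S$, write $\alpha=\beta$ if $\phi(\alpha)=\phi(\beta)$ (with $\alpha\varepsilon\equiv\alpha$), and for $a\in A\cup\{\varepsilon\}$ let $L_a^\$=\{(\alpha,\beta)\delta^R_A:\alpha,\beta\in L,\ \alpha a=\beta\}$. $(A,L)$ is an automatic structure if every $L_a^\$$ is regular; it is a prefix-automatic structure if moreover $\{(\alpha,\beta)\delta_A^R:\alpha\in L,\ \beta\in\mathrm{Pref}(L),\ \alpha=\beta\}$ is regular, $\mathrm{Pref}(L)$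 being the set of prefixes of words in $L$. For $S^1$ the map sends $e$ to the identity. *)

(* Defs.v *)
From mathcomp Require Import all_boot.
Set Implicit Arguments. Unset Strict Implicit. Unset Printing Implicit Defensive.

Definition lang (S : finType) := seq S -> Prop.

Definition regular (S : finType) (L : lang S) : Prop :=
  exists (Q : finType) (q0 : Q) (delta : Q -> S -> Q) (F : pred Q),
    forall w, L w <-> F (foldl delta q0 w).

Inductive cong (A : Type) (R : seq A -> seq A -> Prop) : seq A -> seq A -> Prop :=
| cong_base u v : R u v -> cong R u v
| cong_refl u : cong R u u
| cong_sym u v : cong R u v -> cong R v u
| cong_trans u v w : cong R u v -> cong R v w -> cong R u w
| cong_ctx x y u v : cong R u v -> cong R (x ++ u ++ y) (x ++ v ++ y).

(* The padded alphabet A(2,$): pairs over A u {$} (None = $) except ($,$). *)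
Definition pad2 (A : finType) := {p : option A * option A | p != (None, None)}.

Definition conv_raw (A : finType) (a b : seq A) : seq (option A * option A) :=
  mkseq (fun i => (nth None (map Some a) i, nth None (map Some b) i))
        (maxn (size a) (size b)).
Definition conv (A : finType) (a b : seq A) : seq (pad2 A) :=
  pmap insub (conv_raw a b).

Definition opt_word (A : Type) (a : option A) : seq A :=
  if a is Some x then [:: x] else [::].

(* L_a^$ for a in A u {eps} (None = eps). *)
Definition La (A : finType) (R : seq A -> seq A -> Prop) (L : lang A)
  (a : option A) : lang (pad2 A) :=
  fun w => exists al be, [/\ L al, L be, cong R (al ++ opt_word a) be & w = conv al be].

Definition Pref (A : Type) (L : seq A -> Prop) : seq A -> Prop :=
  fun b => exists g, L (b ++ g).

Definition automatic_structure (A : finType) (R : seq A -> seq A -> Prop)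
  (L : lang A) : Prop :=
  [/\ regular L,
      (forall w, L w -> w <> [::]),
      (forall w, w <> [::] -> exists u, L u /\ cong R w u) &
      (forall a : option A, regular (La R L a))].

Definition prefix_automatic_structure (A : finType) (R : seq A -> seq A -> Prop)
  (L : lang A) : Prop :=
  automatic_structure R L /\
  regular (fun w : seq (pad2 A) =>
    exists al be, [/\ L al, Pref L be, cong R al be & w = conv al be]).

(* Monoid S^1: new letter e encoded as None in alphabet option A. *)
Definition R1 (A : Type) (R : seq A -> seq A -> Prop) : seq (option A) -> seq (option A) -> Prop :=
  fun u v =>
    (exists u0 v0, [/\ R u0 v0, u = map Some u0 & v = map Some v0]) \/
    (exists a : A, u = [:: None; Some a] /\ v = [:: Some a]) \/
    (exists a : A, u = [:: Some a; None] /\ v = [:: Some a]) \/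
    (u = [:: None; None] /\ v = [:: None]).

Definition K1 (A : Type) (L : seq A -> Prop) : seq (option A) -> Prop :=
  fun w => (exists u, L u /\ w = map Some u) \/ w = [:: None].

(* Main.v *)
Require Import Defs.
From mathcomp Require Import all_boot.
From Stdlib Require Import Setoid.
Set Implicit Arguments. Unset Strict Implicit. Unset Printing Implicit Defensive.

Lemma map_iotaS (T : Type) (f : nat -> T) m n : map f (iota m.+1 n) = map (fun i => f i.+1) (iota m n).
Proof. by elim: n m => [|n IH] m //=; rewrite IH. Qed.

Lemma mkseq_S (T : Type) (f : nat -> T) n : mkseq f n.+1 = f 0 :: mkseq (fun i => f i.+1) n.
Proof. by rewrite /mkseq /= map_iotaS. Qed.

Definition ohd (A : Type) (a : seq A) : option A := head None (map Some a).

Lemma conv_raw_cons (A : finType) (a b : seq A) : (a, b) != ([::], [::]) ->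
  conv_raw a b = (ohd a, ohd b) :: conv_raw (behead a) (behead b).
Proof.
move=> hab; rewrite /conv_raw.
have -> : maxn (size a) (size b) = (maxn (size (behead a)) (size (behead b))).+1.
  by case: a b hab => [|x a] [|y b] //= _; rewrite ?maxnSS ?maxn0 ?max0n.
rewrite mkseq_S; congr (_ :: _).


apply: eq_mkseq => i /=.
by rewrite -!nth_behead !behead_map.
Qed.

Lemma conv_ind (A : eqType) (P : seq A -> seq A -> Prop) :
  P [::] [::] -> (forall a b, (a, b) != ([::], [::]) -> P (behead a) (behead b) -> P a b) ->
  forall a b, P a b.
Proof.
move=> H0 HS a b.
move: {2}(size a + size b) (leqnn (size a + size b)) => n.
elim: n a b => [|n IH] a b.
  by case: a b => [|x a] [|y b].
case: a b => [|x a] [|y b] // hs; apply: HS => //; apply: IH => /=; move: hs => /=.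
all: rewrite ?add0n ?addn0 ?addSn ?addnS //.
by move=> /ltnW.
Qed.

Lemma conv_raw_valid (A : finType) (a b : seq A) :
  all (fun p => p != (None, None)) (conv_raw a b).
Proof.
move: a b; apply: conv_ind => // a b hab IH.
rewrite conv_raw_cons // /= IH andbT.
by case: a b hab {IH} => [|x a] [|y b].
Qed.

Lemma map_val_pmap_insub (A : finType) (s : seq (option A * option A)) :
  all (fun p => p != (None, None)) s -> map val (pmap insub s : seq (pad2 A)) = s.
Proof.
elim: s => //= p s IH /andP [hp hs].
by rewrite insubT /= IH.
Qed.

Lemma val_conv (A : finType) (a b : seq A) : map val (conv a b) = conv_raw a b.
Proof. by rewrite map_val_pmap_insub // conv_raw_valid. Qed.

Lemma dec1_conv (A : finType) (a b : seq A) : pmap fst (conv_raw a b) = a.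
Proof.
move: a b; apply: conv_ind => // a b hab IH.
by rewrite conv_raw_cons //=; case: a hab IH => [|x a] //= _ ->.
Qed.

Lemma dec2_conv (A : finType) (a b : seq A) : pmap snd (conv_raw a b) = b.
Proof.
move: a b; apply: conv_ind => // a b hab IH.
by rewrite conv_raw_cons //=; case: b hab IH => [|x b] //= _ ->.
Qed.

Lemma conv_inj (A : finType) (a b a' b' : seq A) : conv a b = conv a' b' -> a = a' /\ b = b'.
Proof.
move=> /(congr1 (map val)); rewrite !val_conv => h.
by split; [rewrite -(dec1_conv a b) -(dec1_conv a' b') h | rewrite -(dec2_conv a b) -(dec2_conv a' b') h].
Qed.

Lemma regular_ext (S : finType) (L1 L2 : lang S) :
  (forall w, L1 w <-> L2 w) -> regular L1 -> regular L2.
Proof.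
move=> h [Q [q0 [d [F HF]]]]; exists Q, q0, d, F => w.
by split => [/h /HF|/HF /h].
Qed.

Lemma regular_union (S : finType) (L1 L2 : lang S) :
  regular L1 -> regular L2 -> regular (fun w => L1 w \/ L2 w).
Proof.
move=> [Q1 [q1 [d1 [F1 H1]]]] [Q2 [q2 [d2 [F2 H2]]]].
exists (Q1 * Q2)%type, (q1, q2), (fun q y => (d1 q.1 y, d2 q.2 y)),
  (fun q => F1 q.1 || F2 q.2) => w.
have -> : forall p, foldl (fun q y => (d1 q.1 y, d2 q.2 y)) p w = (foldl d1 p.1 w, foldl d2 p.2 w).
  by elim: w => [|y w IH] [p1 p2] //=; rewrite IH.
by rewrite H1 H2 /=; split => [[->|->]|/orP [->|->]]; rewrite ?orbT //; [left|right].
Qed.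

Lemma regular_letter (S : finType) (y0 : S) : regular (fun w => w = [:: y0]).
Proof.
exists (option bool), (Some false),
  (fun q y => if (q == Some false) && (y == y0) then Some true else None),
  (fun q => q == Some true) => w.
have hN : forall w, foldl (fun q y => if (q == Some false) && (y == y0) then Some true else None) None w = None.
  by elim=> //.
case: w => [|y [|z w]] /=.
- by split.
- by case: (y =P y0) => [->|hy]; split => // [[]].
- by case: (y =P y0) => [_|hy] /=; rewrite hN.
Qed.

Lemma regular_img (X Y : finType) (h0 h : X -> Y) (L : lang X) :
  injective h0 -> injective h -> regular L ->
  regular (fun w => exists c v, L (c :: v) /\ w = h0 c :: map h v).
Proof.
move=> i0 i [Q [q0 [d [F HF]]]].
pose d' (s : option (Q * bool)) (y : Y) : option (Q * bool) :=
  match s with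
  | Some (q, false) => if [pick c | h0 c == y] is Some c then Some (d q c, true) else None
  | Some (q, true) => if [pick c | h c == y] is Some c then Some (d q c, true) else None
  | None => None
  end.
pose F' (s : option (Q * bool)) := if s is Some (q, true) then F q else false.
exists (option (Q * bool))%type, (Some (q0, false)), d', F' => w.
have hN : forall w0, foldl d' None w0 = None by elim.
have hB : forall w0 q, (exists v, w0 = map h v /\ F (foldl d q v)) <-> F' (foldl d' (Some (q, true)) w0).
  clear w.
  elim=> [|y w IH] q /=.
    split => [[[|c v] [//= _ ->]]|hq] //; by exists [::].
  case: pickP => [c /eqP hc|hn].
    rewrite -IH; split.
      move=> [[|c' v] [//= [hc' hw] hF]].
      by exists v; split => //; move: hc'; rewrite -hc => /i hcc; by rewrite hcc.
    by move=> [v [hw hF]]; exists (c :: v); rewrite /= hw hc.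
  rewrite hN; split => //; move=> [[|c' v] [//= [hc' _] _]].
  by move: (hn c'); rewrite hc' eqxx.
case: w => [|y w] /=.
  by split => //; move=> [c [v [_ ]]].
case: pickP => [c /eqP hc|hn].
  rewrite -hB; split.
    move=> [c' [v [hL [hc' hw]]]].
    have cc : c = c' by apply: i0; rewrite hc. subst c'. by exists v; split => //; apply: (proj1 (HF (c :: v))).
  by move=> [v [hw hF]]; exists c, v; rewrite hw hc; split => //; apply (proj2 (HF (c :: v))).
rewrite hN; split => //; move=> [c' [v [_ [hc' _]]]].
by move: (hn c'); rewrite hc' eqxx.
Qed.

Definition dlift (A : finType) (Q : Type) (d : Q -> pad2 A -> Q) (q : Q) (p : option A * option A) : Q :=
  if (insub p : option (pad2 A)) is Some p' then d q p' else q.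

Lemma foldl_dlift (A : finType) (Q : Type) (d : Q -> pad2 A -> Q) q s :
  foldl d q (pmap insub s) = foldl (dlift d) q s.
Proof.
elim: s q => //= p s IH q; rewrite /dlift.
by case: (insub p) => [p'|] /=; rewrite IH.
Qed.

Lemma drop_minn (T : Type) (s : seq T) i : drop (minn i.+1 (size s)) s = behead (drop i s).
Proof.
rewrite -drop1 drop_drop add1n.
case: (leqP i.+1 (size s)) => h.
  by [].
by rewrite drop_size drop_oversize // ltnW.
Qed.

Lemma regular_fix1 (A : finType) (L : lang (pad2 A)) (u0 : seq A) :
  regular L -> regular (fun v => L (conv u0 v)).
Proof.
move=> [Q [q0 [d [F HF]]]].
set n := size u0.
pose d2 (s : Q * 'I_n.+1) (c : A) : Q * 'I_n.+1 :=
  (dlift d s.1 (nth None (map Some u0) s.2, Some c), inord (minn s.2.+1 n)).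
pose F2 (s : Q * 'I_n.+1) := F (foldl (dlift d) s.1 (conv_raw (drop s.2 u0) [::])).
exists (Q * 'I_n.+1)%type, (q0, ord0), d2, F2 => v.
have inv : forall v q (i : 'I_n.+1), F2 (foldl d2 (q, i) v) = F (foldl (dlift d) q (conv_raw (drop i u0) v)).
  clear v; elim=> [|c v IH] q i //=.
  rewrite IH inordK; last by rewrite ltnS geq_minr.
  rewrite [conv_raw (drop i u0) (c :: v)]conv_raw_cons; last by case: (drop i u0).
  by rewrite -(drop_minn u0 i) /ohd map_drop -nth0 nth_drop addn0.
by rewrite inv drop0 HF /conv foldl_dlift.
Qed.

Lemma cong_size0 (X : Type) (R : seq X -> seq X -> Prop) :
  (forall u v, R u v -> u <> [::] /\ v <> [::]) ->
  forall u v, cong R u v -> (size u == 0) = (size v == 0).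
Proof.
move=> HR u v; elim=> {u v}.
- by move=> u v /HR [hu hv]; case: u hu => // ? ? _; case: v hv.
- by [].
- by move=> u v _ ->.
- by move=> u v w _ -> _ ->.
- by move=> x y u v _ h; rewrite !size_cat !addn_eq0 h.
Qed.

Lemma cong_nil (X : Type) (R : seq X -> seq X -> Prop) :
  (forall u v, R u v -> u <> [::] /\ v <> [::]) ->
  forall u v, cong R u v -> u <> [::] -> v <> [::].
Proof.
move=> HR u v /(cong_size0 HR) h hu hv; apply: hu; move: h; rewrite hv /=.
by case: u.
Qed.

Lemma cong_nil' (X : Type) (R : seq X -> seq X -> Prop) :
  (forall u v, R u v -> u <> [::] /\ v <> [::]) ->
  forall u v, cong R u v -> v <> [::] -> u <> [::].
Proof. by move=> HR u v /cong_sym /(cong_nil HR). Qed.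

Section Cong.
Variables (A : finType) (R : seq A -> seq A -> Prop).
Hypothesis HR : forall u v, R u v -> u <> [::] /\ v <> [::].

Definition erase (w : seq (option A)) : seq A := pmap id w.

Lemma R1_ne u v : R1 R u v -> u <> [::] /\ v <> [::].
Proof.
case=> [[u0 [v0 [/HR [h1 h2] -> ->]]]|[[a [-> ->]]|[[a [-> ->]]|[-> ->]]]] //.
by split; [case: u0 h1|case: v0 h2].
Qed.

Lemma erase_map u : erase (map Some u) = u.
Proof. by elim: u => //= a u ->. Qed.

Lemma cong_erase x y : cong (R1 R) x y -> cong R (erase x) (erase y).
Proof.
elim=> {x y}.
- move=> u v [[u0 [v0 [h -> ->]]]|[[a [-> ->]]|[[a [-> ->]]|[-> ->]]]].
  + by rewrite !erase_map; apply: cong_base.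
  + exact: cong_refl.
  + exact: cong_refl.
  + exact: cong_refl.
- by move=> u; apply: cong_refl.
- by move=> u v _ h; apply: cong_sym.
- by move=> u v w _ h1 _ h2; apply: cong_trans h2.
- by move=> x y u v _ h; rewrite /erase !pmap_cat; apply: cong_ctx.
Qed.

Lemma cong_map u v : cong R u v -> cong (R1 R) (map Some u) (map Some v).
Proof.
elim=> {u v}.
- by move=> u v h; apply: cong_base; left; exists u, v.
- by move=> u; apply: cong_refl.
- by move=> u v _ h; apply: cong_sym.
- by move=> u v w _ h1 _ h2; apply: cong_trans h2.
- by move=> x y u v _ h; rewrite !map_cat; apply: cong_ctx.
Qed.

Lemma cong_ctxL (x u v : seq (option A)) : cong (R1 R) u v -> cong (R1 R) (x ++ u) (x ++ v).
Proof. by move=> /(cong_ctx x [::]); rewrite !cats0. Qed.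

Lemma cong_someL w a : cong (R1 R) (Some a :: w) (Some a :: map Some (erase w)).
Proof.
elim: w a => [|[b|] w IH] a /=.
- exact: cong_refl.
- by apply: (cong_ctxL [:: Some a]); apply: IH.
- apply: cong_trans (IH a).
  have := @cong_ctx _ (R1 R) [::] w [:: Some a; None] [:: Some a].
  apply; apply: cong_base; right; right; left; by exists a.
Qed.

Lemma cong_erase_back w : erase w <> [::] -> cong (R1 R) w (map Some (erase w)).
Proof.
elim: w => [|[a|] w IH] //= h.
- exact: cong_someL.
- have {}IH := IH h.
  case E: (erase w) IH h => [|a r] // IH _.
  apply: cong_trans (cong_ctxL [:: None] IH) _ => /=.
  have := @cong_ctx _ (R1 R) [::] (map Some r) [:: None; Some a] [:: Some a].
  apply; apply: cong_base; right; left; by exists a.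
Qed.

Lemma cong_allnone w : erase w = [::] -> w <> [::] -> cong (R1 R) w [:: None].
Proof.
elim: w => [|[a|] w IH] //= h _.
case: w IH h => [|b w] IH h; first exact: cong_refl.
apply: cong_trans (cong_ctxL [:: None] (IH h _)) _ => //.
by apply: cong_base; right; right; right.
Qed.

Lemma cong_iff w1 w2 : w1 <> [::] -> w2 <> [::] ->
  (cong (R1 R) w1 w2 <-> cong R (erase w1) (erase w2)).
Proof.
move=> h1 h2; split; first exact: cong_erase.
case E1: (erase w1) => [|a r] h.
- have E2 : erase w2 = [::].
    by case E2: (erase w2) => //; have := cong_nil' HR h; rewrite E2 => /(_ ltac:(by [])) [].
  by apply: cong_trans (cong_allnone E1 h1) (cong_sym (cong_allnone E2 h2)).
- have E2 : erase w2 <> [::] by apply: (cong_nil HR h).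
  apply: cong_trans (cong_erase_back _) _; first by rewrite E1.
  rewrite E1; apply: cong_trans (cong_map h) (cong_sym (cong_erase_back E2)).
Qed.

End Cong.

Definition liftp (A : Type) (p : option A * option A) : option (option A) * option (option A) :=
  (omap Some p.1, omap Some p.2).

Lemma liftp_ok (A : finType) (p : option A * option A) : p != (None, None) -> liftp p != (None, None).
Proof. by case: p => [[a|] [b|]]. Qed.

Definition phi (A : finType) (p : pad2 A) : pad2 (option A) := exist _ (liftp (val p)) (liftp_ok (valP p)).

Definition g1 (A : finType) (c : A) : pad2 (option A) := exist _ (Some None, Some (Some c)) isT.
Definition g (A : finType) (c : A) : pad2 (option A) := exist _ (None, Some (Some c)) isT.
Definition ee (A : finType) : pad2 (option A) := exist _ (Some None, Some None) isT.

Lemma phi_inj (A : finType) : injective (@phi A).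
Proof.
move=> p q /(congr1 val) /= h; apply: val_inj; move: h.
by case: p => [[[a|] [b|]] ?]; case: q => [[[a'|] [b'|]] ?] //= [] *; subst.
Qed.

Lemma g1_inj (A : finType) : injective (@g1 A).
Proof. by move=> a b /(congr1 val) [->]. Qed.

Lemma g_inj (A : finType) : injective (@g A).
Proof. by move=> a b /(congr1 val) [->]. Qed.

Lemma conv_map (A : finType) (u v : seq A) : conv (map Some u) (map Some v) = map (@phi A) (conv u v).
Proof.
apply: (inj_map val_inj); rewrite val_conv -map_comp.
rewrite (eq_map (_ : val \o @phi A =1 @liftp A \o val)) // (map_comp (@liftp A) val) val_conv.
move: u v; apply: conv_ind => // u v hab IH.
rewrite conv_raw_cons; last by case: u v hab {IH} => [|x u] [|y v].
rewrite (conv_raw_cons hab) /= !behead_map IH.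
by case: u v {hab IH} => [|x u] [|y v].
Qed.

Lemma conv_raw_nilL (A : finType) (v : seq A) : conv_raw [::] v = map (fun c => (None, Some c)) v.
Proof. by elim: v => // c v IH; rewrite conv_raw_cons //= IH. Qed.

Lemma conv_none (A : finType) (c : A) v : conv [:: None] (map Some (c :: v)) = g1 c :: map (@g A) v.
Proof.
apply: (inj_map val_inj); rewrite val_conv /= conv_raw_cons //= -map_comp.
by rewrite conv_raw_nilL -map_comp.
Qed.

Lemma conv_ee (A : finType) : conv [:: None] [:: None] = [:: @ee A].
Proof. by apply: (inj_map val_inj); rewrite val_conv /= conv_raw_cons. Qed.

Lemma conv_nil (A : finType) (a b : seq A) : conv a b = [::] -> a = [::].
Proof. by move=> /(congr1 (map val)); rewrite val_conv /= => h; rewrite -(dec1_conv a b) h. Qed.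

Lemma img_iff (X Y : Type) (h : X -> Y) (P : seq X -> Prop) :
  (forall w, P w -> w <> [::]) -> forall w,
  (exists c v, P (c :: v) /\ w = h c :: map h v) <-> (exists w', P w' /\ w = map h w').
Proof.
move=> hP w; split.
  by move=> [c [v [hc ->]]]; exists (c :: v).
by move=> [[|c v] [hw ->]]; [case: (hP _ hw) | exists c, v].
Qed.

Lemma regular_map (X Y : finType) (h : X -> Y) (P : lang X) :
  injective h -> (forall w, P w -> w <> [::]) -> regular P ->
  regular (fun w => exists w', P w' /\ w = map h w').
Proof.
move=> ih hP rP; apply: (regular_ext (img_iff h hP)).
exact: regular_img.
Qed.

Lemma K1_ne (A : finType) (L : seq A -> Prop) : (forall w, L w -> w <> [::]) ->
  forall w, K1 L w -> w <> [::].
Proof. by move=> Lne w [[u [/Lne hu ->]]|->] //; case: u hu. Qed.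

Lemma erase_cat (A : finType) (s t : seq (option A)) : erase (s ++ t) = erase s ++ erase t.
Proof. exact: pmap_cat. Qed.

Theorem mainTheorem2 (A : finType) (R : seq A -> seq A -> Prop) (L : seq A -> Prop) :
  (forall u v, R u v -> u <> [::] /\ v <> [::]) ->
  prefix_automatic_structure R L ->
  prefix_automatic_structure (R1 R) (K1 L).
Proof.
move=> HR [[regL Lne Lcov LaReg] PReg].
have HR1 := R1_ne HR.
have K1ne := K1_ne Lne.
have cne : forall al be, L al -> conv al be <> [::] by move=> al be /Lne h /conv_nil.
split; first split.
-
  apply: (regular_ext (L1 := fun w => (exists w', L w' /\ w = map Some w') \/ w = [:: None])).
    by move=> w.
  apply: regular_union; last exact: regular_letter.
  by apply: regular_map => //; move=> a b [].
- exact: K1ne.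
- move=> w hw.
  case E: (erase w) => [|a r].
    by exists [:: None]; split; [right | exact: cong_allnone].
  have [u [Lu hu]] := Lcov (a :: r) ltac:(by []).
  exists (map Some u); split; first by left; exists u.
  apply: cong_trans (@cong_erase_back A R _ _) _; first by rewrite E.
  by rewrite E; apply: cong_map.
- move=> a.
  pose a' := if a is Some (Some x) then Some x else None.
  have Ea : erase (opt_word a) = opt_word a' by rewrite /a'; case: (a) => [[x|]|].
  have key : forall w, La (R1 R) (K1 L) a w <->
     (exists w', La R L a' w' /\ w = map (@phi A) w') \/
     (exists v, L v /\ cong R (opt_word a') v /\ w = conv [:: None] (map Some v)) \/
     (a' = None /\ w = [:: ee A]).
    move=> w; split.
    + move=> [al [be [Kal Kbe hc ->]]].
      have hne1 : al ++ opt_word a <> [::] by move: (K1ne _ Kal); case: (al).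
      move/(cong_iff HR hne1 (K1ne _ Kbe)): hc; rewrite erase_cat Ea.
      case: Kal => [[u [Lu ->]]|->]; case: Kbe => [[v [Lv ->]]|->]; rewrite ?erase_map /=.
      * move=> hc; left; exists (conv u v); split; last exact: conv_map.
        by exists u, v.
      * move=> /(cong_nil HR) h; exfalso; apply: h => //.
        by case: u Lu (Lne _ Lu).
      * move=> hc; right; left; exists v; split => //.
      * move=> hc; right; right; split; last exact: conv_ee.
        by move: hc; case: (a') => // x /(cong_nil HR) h; exfalso; apply: h.
    + move=> [[w' [[u [v [Lu Lv hc ->]]] ->]]|[[v [Lv [hc ->]]]|[ha ->]]].
      * exists (map Some u), (map Some v); split; [by left; exists u|by left; exists v| |].
          apply/(cong_iff HR).
          - by move: (Lne _ Lu); case: (u).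
          - by move: (Lne _ Lv); case: (v).
          by rewrite erase_cat Ea !erase_map.
        by rewrite conv_map.
      * exists [:: None], (map Some v); split; [by right|by left; exists v| |by []].
        apply/(cong_iff HR) => //; first by move: (Lne _ Lv); case: (v).
        by rewrite erase_cat Ea erase_map.
      * exists [:: None], [:: None]; split; [by right|by right| |by rewrite conv_ee].
        apply/(cong_iff HR) => //.
        by rewrite erase_cat Ea ha; apply: cong_refl.
  have Lane : forall b w, La R L b w -> w <> [::].
    by move=> b w [al [be [Lal _ _ ->]]]; apply: cne.
  case Ha' : a' key => [x|] key.
  + have [u0 [Lu0 hu0]] := Lcov [:: x] ltac:(by []).
    pose V := fun v => La R L None (conv u0 v).
    have rV : regular V by apply: regular_fix1.
    have rM := regular_img (@g1_inj A) (@g_inj A) rV.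
    apply: (regular_ext _ (regular_union (regular_map (@phi_inj A) (Lane _) (LaReg (Some x))) rM)).
    move=> w; rewrite key; split.
    * move=> [h|[c [v [hV ->]]]]; first by left.
      move: hV => [al [be [Lal Lbe hc /conv_inj [? ?]]]]; subst al be.
      right; left; exists (c :: v); split => //; split; last by rewrite conv_none.
      by rewrite cats0 in hc; apply: cong_trans hu0 hc.
    * move=> [h|[[v [Lv [hc ->]]]|[//]]]; first by left.
      right; case: v Lv hc => [|c v] Lv hc; first by case: (Lne _ Lv).
      exists c, v; split; last exact: conv_none.
      exists u0, (c :: v); split => //; rewrite cats0.
      exact: cong_trans (cong_sym hu0) hc.
  + apply: (regular_ext _ (regular_union (regular_map (@phi_inj A) (Lane _) (LaReg None)) (regular_letter (ee A)))).
    move=> w; rewrite key; split.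
    * by move=> [h|->]; [left|right; right].
    * move=> [h|[[v [Lv [hc _]]]|[_ ->]]]; [by left| |by right].
      exfalso; move: (cong_nil' HR hc (Lne _ Lv)); by apply.
-
  pose P := fun w : seq (pad2 A) =>
    exists al be, [/\ L al, Pref L be, cong R al be & w = conv al be].
  have Pne : forall w, P w -> w <> [::].
    by move=> w [al [be [Lal _ _ ->]]]; apply: cne.
  apply: (regular_ext _ (regular_union
     (regular_map (@phi_inj A) Pne PReg) (regular_letter (ee A)))).
  move=> w; split.
  + move=> [[w' [[u [b [Lu [gg Lbg] hc ->]]] ->]]|->].
      exists (map Some u), (map Some b); split; [by left; exists u| |exact: cong_map|by rewrite conv_map].
      by exists (map Some gg); left; exists (b ++ gg); rewrite map_cat.
    exists [:: None], [:: None]; split; [by right| |exact: cong_refl|by rewrite conv_ee].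
    by exists [::]; right.
  + move=> [al [be [Kal [gg Kbg] hc ->]]].
    have hbe : be <> [::] by apply: (cong_nil HR1 hc); apply: K1ne.
    have hal : al <> [::] by apply: K1ne.
    move/(cong_iff HR hal hbe): hc => hc.
    have Ebe : (exists b, Pref L b /\ be = map Some b) \/ be = [:: None].
      case: Kbg => [[u [Lu hu]]|hu].
        left; exists (take (size be) u); split.
          by exists (drop (size be) u); rewrite cat_take_drop.
        by rewrite map_take -hu take_size_cat.
      by right; move: hu hbe; case: (be) => [|y [|z r]] //= [-> _].
    case: Kal hc => [[u [Lu ->]]|->]; case: Ebe => [[b [Pb Eb]]|Eb]; rewrite Eb in hbe *; rewrite ?erase_map /=.
    * move=> hc; left; exists (conv u b); split; last by rewrite conv_map.
      by exists u, b.
    * move=> /(cong_nil HR) h; exfalso; apply: h => //.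
      by move: (Lne _ Lu); case: (u).
    * move=> hc; exfalso; move: hbe; case: (b) hc => [|y r] hc hb; first by apply: hb.
      exact: (cong_nil' HR hc ltac:(by []) erefl).
    * by move=> _; right; rewrite conv_ee.
Qed.
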